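(* Under the same setting as follows: let $\Sigma \subset \mathbb{R}^N$ be proximinal, $A \in \mathbb{R}^{m\times N}$, $\hat{x} \in \Sigma$, $e \in \mathbb{R}^m$, $y = A\hat{x}+e$, $\mu>0$, $\lambda \in [0,1]$, $\eta \ge 0$, and $P_\Sigma$ a generalized projection onto $\Sigma$ with $\beta = \beta_\Sigma(P_\Sigma) < \infty$ such that for every $z$ and every $u \in P_\Sigma(z)$ there is $w \in P^\perp_\Sigma(z)$ with $\|u-w\|_2 \le \eta$. Let $\delta = \delta_\Sigma(\mu A^TA)$. For any $x \in \mathbb{R}^N$, any $p \in P_\Sigma(x)$, $z = (1-\lambda)x + \lambda p$ and $x^+ = z - \mu A^T(Az - y)$, we have $$\|x^+ - \hat{x}\|_2 \le \big(\delta\beta + |1-\lambda|\,\|I-\mu A^TA\|_{\mathrm{op}}\big)\|x - \hat{x}\|_2 + |1-\lambda|\,\|I-\mu A^TA\|_{\mathrm{op}}\,\eta + \mu\|A^Te\|_2.$$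
   Context: Secant set: $\Sigma - \Sigma = \{x_1 - x_2 : x_1, x_2 \in \Sigma\}$. Restricted isometry constant: for a matrix $B \in \mathbb{R}^{N\times N}$, $\delta_\Sigma(B)$ is the smallest $\delta \ge 0$ such that $\|(I-B)(x_1-x_2)\|_2 \le \delta\|x_1-x_2\|_2$ for all $x_1,x_2 \in \Sigma$. A generalized projection onto $\Sigma$ is a (set-valued) map $P$ with $P(z) \subset \Sigma$ (nonempty) for every $z \in \mathbb{R}^N$. $\Sigma$ is proximinal if $\arg\min_{x\in\Sigma}\|x-z\|_2 \neq \emptyset$ for all $z$, and then the orthogonal projection is the set-valued map $P^\perp_\Sigma(z) = \arg\min_{x\in\Sigma}\|x-z\|_2$. Restricted Lipschitz constant: $\beta_\Sigma(P)$ is the smallest $\beta$ such that $\|u - x\|_2 \le \beta\|z - x\|_2$ for all $z \in \mathbb{R}^N$, $x \in \Sigma$, $u \in P(z)$. $\|\cdot\|_{\mathrm{op}}$ is the operator norm induced by $\|\cdot\|_2$. *)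

(* Defs.v *)
From HB Require Import structures.
From mathcomp Require Import all_boot all_order all_algebra.
From mathcomp Require Import classical_sets reals.
Set Implicit Arguments. Unset Strict Implicit. Unset Printing Implicit Defensive.
Import Order.TTheory GRing.Theory Num.Theory.
Local Open Scope ring_scope.
Local Open Scope classical_set_scope.

Section Defs.
Variable R : realType.

Definition norm2 (n : nat) (v : 'cV[R]_n) : R :=
  Num.sqrt (\sum_(i < n) (v i 0) ^+ 2).

Definition opnorm (n : nat) (M : 'M[R]_n) : R :=
  sup [set norm2 (M *m x) | x in [set x : 'cV[R]_n | norm2 x <= 1]].

Definition rip_ok (n : nat) (Sigma : set 'cV[R]_n) (B : 'M[R]_n) (d : R) : Prop :=
  0 <= d /\ forall x1 x2, Sigma x1 -> Sigma x2 ->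
    norm2 ((1%:M - B) *m (x1 - x2)) <= d * norm2 (x1 - x2).
Definition rip_const (n : nat) (Sigma : set 'cV[R]_n) (B : 'M[R]_n) : R :=
  inf [set d | rip_ok Sigma B d].

Definition gen_proj (n : nat) (Sigma : set 'cV[R]_n) (P : 'cV[R]_n -> set 'cV[R]_n) : Prop :=
  forall z, P z `<=` Sigma /\ P z !=set0.

Definition orth_proj (n : nat) (Sigma : set 'cV[R]_n) (z : 'cV[R]_n) : set 'cV[R]_n :=
  [set x | Sigma x /\ forall y, Sigma y -> norm2 (x - z) <= norm2 (y - z)].

Definition proximinal (n : nat) (Sigma : set 'cV[R]_n) : Prop :=
  forall z, orth_proj Sigma z !=set0.

Definition rlip_ok (n : nat) (Sigma : set 'cV[R]_n) (P : 'cV[R]_n -> set 'cV[R]_n) (b : R) : Prop :=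
  forall z x u, Sigma x -> P z u -> norm2 (u - x) <= b * norm2 (z - x).
Definition rlip_const (n : nat) (Sigma : set 'cV[R]_n) (P : 'cV[R]_n -> set 'cV[R]_n) : R :=
  inf [set b | rlip_ok Sigma P b].

End Defs.

(* Main.v *)
Require Import Defs.
From HB Require Import structures.
From mathcomp Require Import all_boot all_order all_algebra.
From mathcomp Require Import classical_sets reals.
From mathcomp Require Import ring lra.
Import Order.TTheory GRing.Theory Num.Theory.
Local Open Scope ring_scope.
Local Open Scope classical_set_scope.

Set Implicit Arguments. Unset Strict Implicit.
Section H.
Variable R : realType.
Implicit Types n : nat.

Lemma CS n (a b : 'I_n -> R) :
  (\sum_i a i * b i) ^+ 2 <= (\sum_i a i ^+ 2) * (\sum_i b i ^+ 2).
Proof.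
set A := \sum_i a i ^+ 2; set C := \sum_i a i * b i; set B := \sum_i b i ^+ 2.
have A0 : 0 <= A by apply: sumr_ge0 => i _; exact: sqr_ge0.
have B0 : 0 <= B by apply: sumr_ge0 => i _; exact: sqr_ge0.
have key : forall t, 0 <= t ^+ 2 * A + (2 * t) * C + B.
  move=> t.
  have -> : t ^+ 2 * A + (2 * t) * C + B = \sum_i (t * a i + b i) ^+ 2.
    rewrite /A /B /C !mulr_sumr -!big_split /=; apply: eq_bigr => i _; ring.
  by apply: sumr_ge0 => i _; exact: sqr_ge0.
have [Az|Anz] := eqVneq A 0.
  have ai : forall i, a i = 0.
    move=> i; apply/eqP; rewrite -sqrf_eq0; apply/eqP.
    by apply: (psumr_eq0P (P := xpredT) (fun i _ => sqr_ge0 (a i)) Az).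
  rewrite /C big1 ?expr0n /= ?Az ?mul0r // => i _; by rewrite ai mul0r.
have Ap : 0 < A by rewrite lt0r Anz A0.
have := key (- C / A).
have -> : (- C / A) ^+ 2 * A + 2 * (- C / A) * C + B = (A * B - C ^+ 2) / A.
  by field.
move=> H.
have H2 : A * B - C ^+ 2 = ((A * B - C ^+ 2) / A) * A by field.
have : 0 <= A * B - C ^+ 2 by rewrite H2; apply: mulr_ge0.
by rewrite subr_ge0 mulrC.
Qed.


Lemma norm2_ge0 n (v : 'cV[R]_n) : 0 <= norm2 v.
Proof. exact: sqrtr_ge0. Qed.

Lemma sumsq_ge0 n (f : 'I_n -> R) : 0 <= \sum_i f i ^+ 2.
Proof. by apply: sumr_ge0 => i _; exact: sqr_ge0. Qed.

Lemma norm2_sq n (v : 'cV[R]_n) : norm2 v ^+ 2 = \sum_i (v i 0) ^+ 2.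
Proof. by rewrite /norm2 sqr_sqrtr // sumsq_ge0. Qed.

Lemma norm2Z n c (v : 'cV[R]_n) : norm2 (c *: v) = `|c| * norm2 v.
Proof.
rewrite /norm2; under eq_bigr => i _ do rewrite mxE exprMn.
by rewrite -mulr_sumr sqrtrM ?sqr_ge0 // sqrtr_sqr.
Qed.

Lemma norm2N n (v : 'cV[R]_n) : norm2 (- v) = norm2 v.
Proof. by rewrite -scaleN1r norm2Z normrN normr1 mul1r. Qed.

Lemma norm2B n (u v : 'cV[R]_n) : norm2 (u - v) = norm2 (v - u).
Proof. by rewrite -norm2N opprB. Qed.

Lemma norm2D n (u v : 'cV[R]_n) : norm2 (u + v) <= norm2 u + norm2 v.
Proof.
rewrite -ler_sqr ?nnegrE ?addr_ge0 ?norm2_ge0 //.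
rewrite sqrrD !norm2_sq.
have -> : \sum_i ((u + v) i 0) ^+ 2 =
   \sum_i (u i 0) ^+ 2 + (\sum_i u i 0 * v i 0) *+ 2 + \sum_i (v i 0) ^+ 2.
  rewrite -sumrMnl -!big_split /=; apply: eq_bigr => i _; rewrite mxE; ring.
rewrite lerD2r lerD2l lerMn2r /=.
have h1 : \sum_i u i 0 * v i 0 <= `|\sum_i u i 0 * v i 0| by exact: ler_norm.
apply: (le_trans h1).
rewrite -sqrtr_sqr /norm2 -sqrtrM ?sumsq_ge0 // ler_sqrt; last first.
  by apply: mulr_ge0; apply: sumsq_ge0.
exact: CS.
Qed.

Lemma norm2_eq0 n (v : 'cV[R]_n) : norm2 v = 0 -> v = 0.
Proof.
move=> /eqP; rewrite /norm2 sqrtr_eq0 => H.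
have H0 : \sum_i (v i 0) ^+ 2 = 0 by apply/le_anti; rewrite H sumsq_ge0.
apply/matrixP => i j; rewrite ord1 mxE; apply/eqP; rewrite -sqrf_eq0; apply/eqP.
exact: (psumr_eq0P (P := xpredT) (fun i _ => sqr_ge0 (v i 0)) H0).
Qed.

Lemma mx_bound k n (M : 'M[R]_(k, n)) (v : 'cV[R]_n) :
  norm2 (M *m v) <= Num.sqrt (\sum_i \sum_j M i j ^+ 2) * norm2 v.
Proof.
rewrite /norm2 -sqrtrM; last by apply: sumr_ge0 => i _; exact: sumsq_ge0.
rewrite ler_sqrt; last by apply: mulr_ge0; [apply: sumr_ge0 => i _; exact: sumsq_ge0|exact: sumsq_ge0].
rewrite mulr_suml; apply: ler_sum => i _; rewrite mxE.
exact: CS.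
Qed.


Lemma opnorm_hs n (M : 'M[R]_n) :
  has_sup [set norm2 (M *m x) | x in [set x : 'cV[R]_n | norm2 x <= 1]].
Proof.
split.
  exists (norm2 (M *m 0)); exists 0 => //=.
  by rewrite /norm2 big1 ?sqrtr0 // => i _; rewrite mxE expr0n.
exists (Num.sqrt (\sum_i \sum_j M i j ^+ 2)) => _ [x /= Hx <-].
have HH := mx_bound M x.
have H2 : Num.sqrt (\sum_i \sum_j M i j ^+ 2) * norm2 x <= Num.sqrt (\sum_i \sum_j M i j ^+ 2).
  rewrite -[leRHS]mulr1; apply: ler_wpM2l => //; exact: sqrtr_ge0.
apply: (Order.POrderTheory.le_trans HH H2).
Qed.

Lemma opnorm_ge0 n (M : 'M[R]_n) : 0 <= opnorm M.
Proof.
apply: le_trans (norm2_ge0 (M *m 0)) _.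
apply: sup_upper_bound; first exact: opnorm_hs.
exists 0 => //=; by rewrite /norm2 big1 ?sqrtr0 // => i _; rewrite mxE expr0n.
Qed.

Lemma opnorm_bound n (M : 'M[R]_n) v : norm2 (M *m v) <= opnorm M * norm2 v.
Proof.
have [/norm2_eq0 ->|nz] := eqVneq (norm2 v) 0.
  by rewrite mulmx0 /norm2 big1 ?sqrtr0 ?mulr0 // => i _; rewrite mxE expr0n.
have np : 0 < norm2 v by rewrite lt0r nz norm2_ge0.
have H : norm2 (M *m ((norm2 v)^-1 *: v)) <= opnorm M.
  apply: sup_upper_bound; first exact: opnorm_hs.
  exists ((norm2 v)^-1 *: v) => //=.
  by rewrite norm2Z ger0_norm ?invr_ge0 ?norm2_ge0 // mulVf.
move: H; rewrite -scalemxAr norm2Z ger0_norm ?invr_ge0 ?norm2_ge0 //.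
by rewrite ler_pdivrMl // mulrC.
Qed.

Lemma inf_le (S : set R) c s : S !=set0 -> 0 <= s ->
  (forall d, S d -> c <= d * s) -> c <= inf S * s.
Proof.
move=> [d0 Sd0] s0 H.
have [se|nz] := eqVneq s 0.
  by move: (H d0 Sd0); rewrite se !mulr0.
have sp : 0 < s by rewrite lt0r nz s0.
rewrite -ler_pdivrMr //; apply: lb_le_inf; first by exists d0.
by move=> d Sd; rewrite ler_pdivrMr //; exact: H.
Qed.


Lemma key_id N m (A : 'M[R]_(m, N)) (xhat x p : 'cV[R]_N) (e : 'cV[R]_m) mu lam :
  ((1 - lam) *: x + lam *: p - mu *: (A^T *m (A *m ((1 - lam) *: x + lam *: p) - (A *m xhat + e)))) - xhat =
  (1%:M - mu *: (A^T *m A)) *m (p - xhat) + (1 - lam) *: ((1%:M - mu *: (A^T *m A)) *m (x - p)) + mu *: (A^T *m e).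
Proof.
rewrite !mulmxBl !mul1mx -!scalemxAl -!mulmxA.
rewrite ?mulmxBr ?mulmxDr -?scalemxAr ?mulmxBr ?mulmxDr -?scalemxAr.
move: (A^T *m (A *m x)) (A^T *m (A *m p)) (A^T *m (A *m xhat)) (A^T *m e) => a1 a2 a3 a4.
apply/matrixP => i j; rewrite !mxE; ring.
Qed.
End H.

Theorem mainTheorem2 (R : realType) (N m : nat) (Sigma : set 'cV[R]_N)
  (A : 'M[R]_(m, N)) (xhat : 'cV[R]_N) (e : 'cV[R]_m) (mu lam eta : R)
  (P : 'cV[R]_N -> set 'cV[R]_N) :
  proximinal Sigma -> Sigma xhat -> 0 < mu -> 0 <= lam -> lam <= 1 -> 0 <= eta ->
  gen_proj Sigma P ->
  (exists b, rlip_ok Sigma P b) ->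
  (forall z u, P z u -> exists w, orth_proj Sigma z w /\ norm2 (u - w) <= eta) ->
  forall (x p : 'cV[R]_N), P x p ->
  let y := A *m xhat + e in
  let B := mu *: (A^T *m A) in
  let delta := rip_const Sigma B in
  let beta := rlip_const Sigma P in
  let z := (1 - lam) *: x + lam *: p in
  let xplus := z - mu *: (A^T *m (A *m z - y)) in
  norm2 (xplus - xhat) <=
    (delta * beta + `|1 - lam| * opnorm (1%:M - B)) * norm2 (x - xhat)
    + `|1 - lam| * opnorm (1%:M - B) * eta + mu * norm2 (A^T *m e).
Proof.
move=> prox Sxh mu0 lam0 lam1 eta0 gp [b0 Hb0] Hw x p Pxp; cbv zeta.
rewrite key_id.
set B := mu *: (A^T *m A).
set delta := rip_const Sigma B.
set beta := rlip_const Sigma P.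
have Sp : Sigma p by have [H _] := gp x; exact: H.
set M := 1%:M - B.
have ripne : [set d | rip_ok Sigma B d] !=set0.
  exists (opnorm M); split; first exact: opnorm_ge0.
  by move=> x1 x2 _ _; exact: opnorm_bound.
have d0 : 0 <= delta.
  apply: lb_le_inf => //; by move=> d [].
have H1 : norm2 (M *m (p - xhat)) <= delta * norm2 (p - xhat).
  apply: inf_le => //; first exact: norm2_ge0.
  by move=> d [_ Hd]; exact: Hd.
have H2 : norm2 (p - xhat) <= beta * norm2 (x - xhat).
  apply: inf_le; first by exists b0.
    exact: norm2_ge0.
  by move=> b Hb; exact: Hb.
have [w [[Sw Hwmin] Hpw]] := Hw x p Pxp.
have H3 : norm2 (x - p) <= norm2 (x - xhat) + eta.
  have -> : x - p = (x - w) + (w - p) by rewrite addrA subrK.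
  have T1 := norm2D (x - w) (w - p).
  have T2 : norm2 (x - w) <= norm2 (x - xhat).
    by rewrite norm2B [norm2 (x - xhat)]norm2B; exact: Hwmin.
  have T3 : norm2 (w - p) <= eta by rewrite norm2B.
  lra.
have K0 := opnorm_ge0 M.
have H4 : norm2 (M *m (x - p)) <= opnorm M * (norm2 (x - xhat) + eta).
  have T1 := opnorm_bound M (x - p).
  have T2 : opnorm M * norm2 (x - p) <= opnorm M * (norm2 (x - xhat) + eta).
    by apply: ler_wpM2l.
  lra.
have n0 := norm2_ge0 (x - xhat).
have F1 := norm2D (M *m (p - xhat) + (1 - lam) *: (M *m (x - p))) (mu *: (A^T *m e)).
have F2 := norm2D (M *m (p - xhat)) ((1 - lam) *: (M *m (x - p))).
rewrite norm2Z (gtr0_norm mu0) in F1.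
rewrite norm2Z in F2.
have H5 : norm2 (M *m (p - xhat)) <= delta * beta * norm2 (x - xhat).
  have T : delta * norm2 (p - xhat) <= delta * (beta * norm2 (x - xhat)) by apply: ler_wpM2l.
  rewrite -mulrA; lra.
have H6 : `|1 - lam| * norm2 (M *m (x - p)) <= `|1 - lam| * (opnorm M * (norm2 (x - xhat) + eta)).
  by apply: ler_wpM2l => //.
have E : `|1 - lam| * (opnorm M * (norm2 (x - xhat) + eta)) =
   `|1 - lam| * opnorm M * norm2 (x - xhat) + `|1 - lam| * opnorm M * eta by ring.
lra.
Qed.
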